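(* For $n\ge2$ and all $P,Q\in\Gamma_n$, $D_{\Psi\Delta}(P\|Q)\le \frac65 D_{\Psi I}(P\|Q)$.
   Context: $\Gamma_n=\{P=(p_1,\dots,p_n): p_i>0,\ \sum p_i=1\}$. $\Delta(P\|Q)=\sum_{i=1}^n\frac{(p_i-q_i)^2}{p_i+q_i}$; $\Psi(P\|Q)=\sum_{i=1}^n\frac{(p_i-q_i)^2(p_i+q_i)}{p_iq_i}$; $I(P\|Q)=\frac12\Big[\sum_{i=1}^n p_i\ln\frac{2p_i}{p_i+q_i}+\sum_{i=1}^n q_i\ln\frac{2q_i}{p_i+q_i}\Big]$. $D_{\Psi\Delta}=\frac1{16}\Psi-\frac14\Delta$, $D_{\Psi I}=\frac1{16}\Psi-I$. *)

(* Defs.v *)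
From Stdlib Require Import Reals.
Open Scope R_scope.

Fixpoint sumn (n : nat) (f : nat -> R) : R :=
  match n with O => 0 | S m => sumn m f + f m end.

Definition Gamma (n : nat) (P : nat -> R) : Prop :=
  (forall i, (i < n)%nat -> 0 < P i) /\ sumn n P = 1.

Definition Delta (n : nat) (P Q : nat -> R) : R :=
  sumn n (fun i => (P i - Q i)^2 / (P i + Q i)).

Definition Psi (n : nat) (P Q : nat -> R) : R :=
  sumn n (fun i => (P i - Q i)^2 * (P i + Q i) / (P i * Q i)).

Definition Ient (n : nat) (P Q : nat -> R) : R :=
  / 2 * (sumn n (fun i => P i * ln (2 * P i / (P i + Q i)))
         + sumn n (fun i => Q i * ln (2 * Q i / (P i + Q i)))).

Definition D_PsiDelta (n : nat) (P Q : nat -> R) : R :=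
  / 16 * Psi n P Q - / 4 * Delta n P Q.

Definition D_PsiI (n : nat) (P Q : nat -> R) : R :=
  / 16 * Psi n P Q - Ient n P Q.

(* Main.v *)
Require Import Defs.
From Stdlib Require Import Reals Lra Lia.
Open Scope R_scope.
From Coquelicot Require Import Coquelicot.
Definition F x := x^2 / (20 * (1 - x^2)) + x^2/4 - 3/10 * ((1+x)*ln (1+x) + (1-x)*ln (1-x)).

Definition F1 x := x / (10 * (1 - x^2)^2) + x / 2 - 3/10 * (ln (1+x) - ln (1-x)).
Definition F1d x := (1 + 3*x^2) / (10 * (1 - x^2)^3) + /2 - 3/5 / (1 - x^2).

Lemma F1_der x : 0 <= x < 1 -> derivable_pt_lim F1 x (F1d x).
Proof.
  intros Hx. apply is_derive_Reals. unfold F1, F1d.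
  assert (H1 : 0 < 1 - x^2) by nra.
  auto_derive.
  - repeat split; try lra; apply Rgt_not_eq; nra.
  - field; repeat split; try lra; apply Rgt_not_eq; nra.
Qed.

Lemma F1d_nonneg x : 0 <= x < 1 -> 0 <= F1d x.
Proof.
  intros Hx. assert (H1 : 0 < 1 - x^2) by nra.
  replace (F1d x) with (x^4 * (5*(1-x^2)+4) / (10*(1-x^2)^3)).
  - apply Rmult_le_pos. apply Rmult_le_pos. nra. nra.
    apply Rlt_le, Rinv_0_lt_compat. apply Rmult_lt_0_compat. lra. apply pow_lt; lra.
  - unfold F1d. field. apply Rgt_not_eq; lra.
Qed.

Lemma F1_nonneg x : 0 <= x < 1 -> 0 <= F1 x.
Proof.
  intros Hx. destruct (Req_dec x 0) as [->|Hn].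
  - unfold F1. rewrite Rplus_0_r, Rminus_0_r, ln_1. lra.
  - destruct (MVT_cor2 F1 F1d 0 x) as [c [Hc1 Hc2]].
    + lra.
    + intros c Hc. apply F1_der. lra.
    + assert (HF0 : F1 0 = 0). { unfold F1. rewrite Rplus_0_r, Rminus_0_r, ln_1. lra. }
      assert (0 <= F1d c) by (apply F1d_nonneg; lra).
      nra.
Qed.

Lemma F_der x : 0 <= x < 1 -> derivable_pt_lim F x (F1 x).
Proof.
  intros Hx. apply is_derive_Reals. unfold F, F1.
  assert (H1 : 0 < 1 - x^2) by nra.
  auto_derive.
  - repeat split; try lra; apply Rgt_not_eq; nra.
  - replace (1 + - x) with (1 - x) by ring. field; repeat split; try lra; apply Rgt_not_eq; nra.
Qed.

Lemma F_nonneg_pos x : 0 <= x < 1 -> 0 <= F x.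
Proof.
  intros Hx. destruct (Req_dec x 0) as [->|Hn].
  - unfold F. rewrite Rplus_0_r, Rminus_0_r, ln_1. lra.
  - destruct (MVT_cor2 F F1 0 x) as [c [Hc1 Hc2]].
    + lra.
    + intros c Hc. apply F_der. lra.
    + assert (HF0 : F 0 = 0). { unfold F. rewrite Rplus_0_r, Rminus_0_r, ln_1. lra. }
      assert (0 <= F1 c) by (apply F1_nonneg; lra).
      nra.
Qed.

Lemma F_nonneg x : -1 < x < 1 -> 0 <= F x.
Proof.
  intros Hx. destruct (Rle_dec 0 x).
  - apply F_nonneg_pos; lra.
  - replace (F x) with (F (-x)).
    + apply F_nonneg_pos; lra.
    + unfold F. replace (1 + - x) with (1 - x) by ring.
      replace (1 - - x) with (1 + x) by ring. replace ((-x)^2) with (x^2) by ring. ring.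
Qed.


Definition term (p q : R) :=
  6/5*(/16*((p-q)^2*(p+q)/(p*q)) - /2*(p * ln (2*p/(p+q)) + q * ln (2*q/(p+q))))
  - (/16*((p-q)^2*(p+q)/(p*q)) - /4*((p-q)^2/(p+q))).

Lemma term_sx s x : 0 < s -> -1 < x < 1 -> term (s*(1+x)/2) (s*(1-x)/2) = s * F x.
Proof.
  intros Hs Hx. unfold term, F.
  replace (2 * (s * (1 + x) / 2) / (s * (1 + x) / 2 + s * (1 - x) / 2)) with (1 + x) by (field; lra).
  replace (2 * (s * (1 - x) / 2) / (s * (1 + x) / 2 + s * (1 - x) / 2)) with (1 - x) by (field; lra).
  field. assert (0 < 1 - x^2) by nra. lra.
Qed.

Lemma term_nonneg p q : 0 < p -> 0 < q -> 0 <= term p q.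
Proof.
  intros Hp Hq.
  set (s := p + q). set (x := (p - q) / (p + q)).
  assert (Hp' : p = s*(1+x)/2) by (unfold s, x; field; lra).
  assert (Hq' : q = s*(1-x)/2) by (unfold s, x; field; lra).
  assert (Hx : -1 < x < 1).
  { unfold x. split.
    - apply Rmult_lt_reg_r with (p+q). lra. unfold Rdiv. rewrite Rmult_assoc, Rinv_l by lra. lra.
    - apply Rmult_lt_reg_r with (p+q). lra. unfold Rdiv. rewrite Rmult_assoc, Rinv_l by lra. lra. }
  rewrite Hp', Hq', term_sx by (unfold s; lra).
  apply Rmult_le_pos. unfold s; lra. apply F_nonneg; exact Hx.
Qed.

Lemma sumn_nonneg n f : (forall i, (i < n)%nat -> 0 <= f i) -> 0 <= sumn n f.
Proof.
  induction n; simpl; intros H. lra.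
  assert (0 <= f n) by (apply H; lia). assert (0 <= sumn n f) by (apply IHn; intros; apply H; lia). lra.
Qed.

Lemma key n ps d a b :
  6/5*(/16*sumn n ps - /2*(sumn n a + sumn n b)) - (/16*sumn n ps - /4*sumn n d)
  = sumn n (fun i => 6/5*(/16*ps i - /2*(a i + b i)) - (/16*ps i - /4*d i)).
Proof. induction n; simpl. ring. rewrite <- IHn. ring. Qed.

Theorem proposition5p10 (n : nat) (P Q : nat -> R) :
  (2 <= n)%nat -> Gamma n P -> Gamma n Q ->
  D_PsiDelta n P Q <= 6 / 5 * D_PsiI n P Q.
Proof.
  intros _ [HP _] [HQ _].
  match goal with |- ?a <= ?b => cut (0 <= b - a); [lra|] end. unfold D_PsiI, D_PsiDelta, Ient.
  unfold Psi, Defs.Delta; rewrite key. apply sumn_nonneg. intros i Hi.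
  apply (term_nonneg (P i) (Q i)); auto.
Qed.
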